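(* Fix $\lambda\ge0$ and an integer $\Delta_{\max}\ge1$. Consider the average-cost Markov decision process with state space $S=\{0,1,\dots,\Delta_{\max}\}$, action set $\{0,1\}$, transition probabilities $\mathbb{P}(\Delta'\mid\Delta,a)$ given in the context, and transition cost $C_\lambda(\Delta,a,\Delta')=\Delta'+\lambda a$, i.e., the problem of finding a policy $\pi$ minimizing $\lim_{T\to\infty}\frac1T\mathbb{E}\big[\sum_{t=0}^{T-1}\{\Delta(t)+\lambda a(t)\}\mid s(0)\big]$. Then an optimal policy of this MDP is a threshold policy: there is $\Delta_T$ such that the optimal action is $a=1$ for all states $\Delta\ge\Delta_T$ and $a=0$ for $\Delta<\Delta_T$.
   Context: Let $0<p_s<1$, $0<p_g<1$, $\bar p_s=1-p_s$, $\bar p_g=1-p_g$. The state $\Delta$ is a (truncated) Version Age of Information. The transition probabilities are: for $a=0$: $\mathbb{P}(\Delta+1\mid\Delta,0)=p_g$ and $\mathbb{P}(\Delta\mid\Delta,0)=\bar p_g$ if $\Delta<\Delta_{\max}$, and $\mathbb{P}(\Delta_{\max}\mid\Delta_{\max},0)=1$; for $a=1$: $\mathbb{P}(\Delta+1\mid\Delta,1)=\bar p_s p_g$ and $\mathbb{P}(\Delta\mid\Delta,1)=\bar p_s\bar p_g$ if $\Delta<\Delta_{\max}$, $\mathbb{P}(\Delta_{\max}\mid\Delta_{\max},1)=\bar p_s$, and in all states $\mathbb{P}(1\mid\Delta,1)=p_sp_g$, $\mathbb{P}(0\mid\Delta,1)=p_s\bar p_g$ (probabilities of coinciding target states add). 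*)

(* Defs.v *)
From HB Require Import structures.
From mathcomp Require Import all_boot all_order all_algebra.
From mathcomp Require Import all_classical all_reals all_analysis.
Set Implicit Arguments. Unset Strict Implicit. Unset Printing Implicit Defensive.
Import Order.TTheory GRing.Theory Num.Theory.
Local Open Scope ring_scope.

Section VAoIMDP.
Variables (R : realType) (ps pg lam : R) (Dmax : nat).

(* States S = {0,..,Dmax}, encoded as 'I_(Dmax.+1); actions a \in {0,1} encoded
   as bool (true = 1).  Indicator of a nat equality as a real. *)
Definition ind (b : bool) : R := if b then 1 else 0.

(* Transition probability P(s' | s, a), as in the context; probabilities of
   coinciding target states add. *)
Definition trans (s : 'I_Dmax.+1) (a : bool) (s' : 'I_Dmax.+1) : R :=
  if ~~ a then
    (if (s < Dmax)%N
     then pg * ind (val s' == (val s).+1) + (1 - pg) * ind (val s' == val s)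
     else ind (val s' == val s))
  else
    (if (s < Dmax)%N
     then (1 - ps) * pg * ind (val s' == (val s).+1)
          + (1 - ps) * (1 - pg) * ind (val s' == val s)
     else (1 - ps) * ind (val s' == val s))
    + ps * pg * ind (val s' == 1%N) + ps * (1 - pg) * ind (val s' == 0%N).

Definition tcost (s : 'I_Dmax.+1) (a : bool) (s' : 'I_Dmax.+1) : R :=
  (val s')%:R + lam * ind a.

(* A (possibly randomized, time-dependent) Markov policy: pol t s a is the
   probability of choosing action a in state s at time t. *)
Definition markov_policy (pol : nat -> 'I_Dmax.+1 -> bool -> R) : Prop :=
  forall t s, (forall a, 0 <= pol t s a) /\ pol t s false + pol t s true = 1.

Fixpoint state_dist (pol : nat -> 'I_Dmax.+1 -> bool -> R) (s0 : 'I_Dmax.+1)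
    (t : nat) : 'I_Dmax.+1 -> R :=
  match t with
  | 0%N => fun s => ind (s == s0)
  | t'.+1 => fun s' =>
      \sum_(s : 'I_Dmax.+1) state_dist pol s0 t' s *
        (pol t' s false * trans s false s' + pol t' s true * trans s true s')
  end.

Definition exp_cost (pol : nat -> 'I_Dmax.+1 -> bool -> R) (s0 : 'I_Dmax.+1)
    (t : nat) : R :=
  \sum_(s : 'I_Dmax.+1) state_dist pol s0 t s *
    \sum_(a : bool) pol t s a *
      \sum_(s' : 'I_Dmax.+1) trans s a s' * tcost s a s'.

Definition avg_cost (pol : nat -> 'I_Dmax.+1 -> bool -> R) (s0 : 'I_Dmax.+1) : R :=
  limn_sup (fun T : nat => (T%:R)^-1 * \sum_(t < T) exp_cost pol s0 t).

Definition threshold_policy (DT : nat) : nat -> 'I_Dmax.+1 -> bool -> R :=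
  fun _ s a => ind (a == (DT <= val s)%N).

End VAoIMDP.

(* Main.v *)
Require Import Defs.
From HB Require Import structures.
From mathcomp Require Import all_boot all_order all_algebra.
From mathcomp Require Import all_classical all_reals all_analysis.
From mathcomp Require Import ring lra.
Import Order.TTheory GRing.Theory Num.Theory.
Local Open Scope ring_scope.
Import numFieldNormedType.Exports.
Local Open Scope classical_set_scope.
Local Open Scope ring_scope.
Section LimSup.
Variable R : realType.

Lemma harm_cvg (g C : R) :
  (fun n : nat => g - C * (n.+1%:R)^-1) @ \oo --> g.
Proof.
have H := cvgB (cvg_cst g) (cvgM (cvg_cst C) (@cvg_harmonic R)).
rewrite mulr0 subr0 in H; exact: H.
Qed.

Lemma harm_cvg' (g C : R) :
  (fun n : nat => g + C * (n.+1%:R)^-1) @ \oo --> g.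
Proof.
have H := cvgD (cvg_cst g) (cvgM (cvg_cst C) (@cvg_harmonic R)).
rewrite mulr0 addr0 in H; exact: H.
Qed.

Lemma inv_harm (n : nat) (C : R) : (0 < n)%N -> 0 <= C ->
  C / n%:R <= (2 * C) * (n.+1%:R)^-1.
Proof.
move=> n0 C0.
have n1 : (1 : R) <= n%:R by rewrite ler1n.
rewrite ler_pdivrMr ?ltr0n // mulrAC ler_pdivlMr ?ltr0n //.
rewrite -natr1; nra.
Qed.

Lemma limsup_eq (u : nat -> R) (g C : R) : 0 <= C ->
  (forall T, (0 < T)%N -> `|u T - g| <= C / T%:R) -> limn_sup u = g.
Proof.
move=> C0 H; apply: (cvg_limn_inf_sup _).2.
have S := squeeze_cvgr (f := fun n : nat => g - 2 * C * n.+1%:R^-1) (h := fun n : nat => g + 2 * C * n.+1%:R^-1) (g := u) (a := \oo).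
apply: (S _ _ g (harm_cvg g (2 * C)) (harm_cvg' g (2 * C))).
exists 1%N => // n /= n1.
have := H n n1; have := inv_harm n C n1 C0.
rewrite ler_norml; move=> h1 /andP[h2 h3].
move: h1 h2 h3; rewrite -!mulrA.
move: (C / n%:R) (C * n.+1%:R^-1) (u n) => a b c h1 h2 h3.
apply/andP; split; lra.
Qed.

Lemma limsup_ge (u : nat -> R) (g C K : R) : 0 <= C ->
  (forall T, (0 < T)%N -> g - C / T%:R <= u T) ->
  (forall T, `|u T| <= K) -> g <= limn_sup u.
Proof.
move=> C0 H Hb.
have ub : has_ubound (range u).
  by exists K => _ [n _ <-]; exact: le_trans (ler_norm _) (Hb n).
have lb : has_lbound (range u).
  exists (- K) => _ [n _ <-]; rewrite lerNl.
  by apply: le_trans (Hb n); rewrite -normrN ler_norm.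
have cs := cvg_sups_inf ub lb.
have hc := harm_cvg g (2 * C).
rewrite /limn_sup -(cvg_lim _ hc) //.
apply: ler_lim; [by apply/cvg_ex; eexists; exact: hc|by apply/cvg_ex; eexists; exact: cs|].
exists 1%N => // n /= n1.
have := H n n1; have := inv_harm n C n1 C0.
have : u n <= sups u n.
  apply: ub_le_sup; last by exists n => /=.
  exact: has_ubound_sdrop.
rewrite -!mulrA.
move: (C / n%:R) (C * n.+1%:R^-1) (u n) (sups u n) => a b c d h1 h2 h3.
lra.
Qed.

End LimSup.

Section AvgLemmas.
Variable R : realType.

Lemma avg_close (T : nat) (S g d C : R) : (0 < T)%N -> S = T%:R * g + d ->
  `|d| <= C -> `|T%:R^-1 * S - g| <= C / T%:R.
Proof.
move=> T0 -> hd; have Tn : T%:R != 0 :> R by rewrite pnatr_eq0 -lt0n.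
have -> : T%:R^-1 * (T%:R * g + d) - g = d / T%:R by field.
rewrite normrM normfV (ger0_norm (ler0n _ _)).
by rewrite ler_wpM2r // invr_ge0 ler0n.
Qed.

Lemma avg_lower (T : nat) (S g d C : R) : (0 < T)%N -> T%:R * g + d <= S ->
  - C <= d -> g - C / T%:R <= T%:R^-1 * S.
Proof.
move=> T0 hS hd; have Tn : T%:R != 0 :> R by rewrite pnatr_eq0 -lt0n.
have Ti : 0 <= T%:R^-1 :> R by rewrite invr_ge0 ler0n.
apply: le_trans (ler_wpM2l Ti hS).
have -> : T%:R^-1 * (T%:R * g + d) = g + d / T%:R by field.
by rewrite lerD2l -mulNr ler_wpM2r.
Qed.

Lemma avg_bnd (c : nat -> R) K : 0 <= K -> (forall t, 0 <= c t <= K) ->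
  forall T, `|T%:R^-1 * \sum_(t < T) c t| <= K.
Proof.
move=> K0 hc T.
have s0 : 0 <= \sum_(t < T) c t by apply: sumr_ge0 => t _; case/andP: (hc t).
have s1 : \sum_(t < T) c t <= K * T%:R.
  apply: le_trans (_ : \sum_(t < T) K <= _).
    by apply: ler_sum => t _; case/andP: (hc t).
  by rewrite sumr_const card_ord mulr_natr.
rewrite ger0_norm ?mulr_ge0 ?invr_ge0 ?ler0n //.
case: T s0 s1 => [|T] s0 s1; first by rewrite invr0 mul0r.
by rewrite mulrC ler_pdivrMr ?ltr0n.
Qed.

End AvgLemmas.
Section Main.
Variables (R : realType) (ps pg lam : R) (Dmax : nat).
Hypotheses (hps0 : 0 < ps) (hps1 : ps < 1) (hpg0 : 0 < pg) (hpg1 : pg < 1)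
  (hlam : 0 <= lam) (hD : (1 <= Dmax)%N).
Local Notation S := 'I_Dmax.+1.
Ltac lra' := have := hps0; have := hps1; have := hpg0; have := hpg1; have := hlam; lra.
Local Notation tr := (@trans R ps pg Dmax).

Lemma sum_ind (k : nat) (F : S -> R) : (k <= Dmax)%N ->
  \sum_(s' : S) ind R (nat_of_ord s' == k) * F s' = F (inord k).
Proof.
move=> kD; rewrite (bigD1 (inord k)) //= inordK // eqxx /ind mul1r big1 ?addr0 //.
move=> i /eqP ik; case: eqP => [iE|]; last by rewrite mul0r.
by exfalso; apply: ik; apply: val_inj; rewrite /= inordK // iE.
Qed.

Lemma sum_ind' (s : S) (F : S -> R) :
  \sum_(s' : S) ind R (nat_of_ord s' == nat_of_ord s) * F s' = F s.
Proof. by rewrite sum_ind ?inord_val // -ltnS. Qed.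

Definition P0 (G : S -> R) (s : S) : R :=
  if (s < Dmax)%N then pg * G (inord s.+1) + (1 - pg) * G s else G s.

Lemma trans0E G s : \sum_s' tr s false s' * G s' = P0 G s.
Proof.
rewrite /trans /P0 /=; case: ifP => sD.
  under eq_bigr do rewrite mulrDl -!mulrA.
  by rewrite big_split /= -!mulr_sumr sum_ind' sum_ind.
by rewrite sum_ind'.
Qed.

Lemma P0_ord0 G : P0 G ord0 = pg * G (inord 1) + (1 - pg) * G (inord 0).
Proof.
by rewrite /P0 /= hD; congr (_ + _ * G _); apply: val_inj; rewrite /= inordK.
Qed.

Lemma trans1E G s : \sum_s' tr s true s' * G s' =
  (1 - ps) * P0 G s + ps * P0 G ord0.
Proof.
rewrite P0_ord0 /trans /P0 /=; case: ifP => sD.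
  under eq_bigr do rewrite !mulrDl -!mulrA.
  rewrite !big_split /= -!mulr_sumr sum_ind' !sum_ind //.
  ring.
under eq_bigr do rewrite !mulrDl -!mulrA.
rewrite !big_split /= -!mulr_sumr sum_ind' !sum_ind //.
ring.
Qed.

Lemma ind_ge0 b : 0 <= ind R b.
Proof. by rewrite /ind; case: b. Qed.

Lemma trans_ge0 s a s' : 0 <= tr s a s'.
Proof.
have p1 : 0 <= 1 - pg by rewrite subr_ge0 ltW.
have q1 : 0 <= 1 - ps by rewrite subr_ge0 ltW.
have p0 := ltW hpg0; have q0 := ltW hps0.
have i0 := ind_ge0.
rewrite /trans; case: a => /=; case: ifP => _.
- by apply: addr_ge0; [apply: addr_ge0|]; [apply: addr_ge0| |];
    rewrite ?mulr_ge0.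
- by apply: addr_ge0; [apply: addr_ge0|]; rewrite ?mulr_ge0.
- by apply: addr_ge0; rewrite ?mulr_ge0.
- by [].
Qed.

Lemma P0_const c s : P0 (fun _ => c) s = c.
Proof. by rewrite /P0; case: ifP => _ //; ring. Qed.

Lemma trans_sum1 s a : \sum_s' tr s a s' = 1.
Proof.
have E : \sum_s' tr s a s' * 1 = 1.
  by case: a; rewrite ?trans1E ?trans0E !P0_const //; ring.
by rewrite -[RHS]E; apply: eq_bigr => i _; rewrite mulr1.
Qed.


Fixpoint hh (g : R) (k : nat) : R :=
  if k is k'.+1 then
    hh g k' + (Num.max (ps * hh g k' - lam) 0 / (1 - ps) + g - k'%:R - pg) / pg
  else 0.

Definition mm g k := Num.max (ps * hh g k - lam) 0.

Definition GG g := g - Dmax%:R + mm g Dmax / (1 - ps).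

Lemma hh_cont k : continuous (fun g => hh g k).
Proof.
elim: k => [|k IH] /= x; first exact: cvg_cst.
apply: cvgD; first exact: IH.
apply: cvgM; last exact: cvg_cst.
apply: cvgD; last exact: cvg_cst.
apply: cvgD; last exact: cvg_cst.
apply: cvgD; last exact: cvg_id.
apply: cvgM; last exact: cvg_cst.
apply: (@continuous_max _ _ (fun g => ps * hh g k - lam) (fun _ => 0)).
  apply: cvgD; last exact: cvg_cst.
  by apply: cvgM; [exact: cvg_cst|exact: IH].
exact: cvg_cst.
Qed.

Lemma GG_cont : continuous GG.
Proof.
move=> x; rewrite /GG /mm.
apply: cvgD; last first.
  apply: cvgM; last exact: cvg_cst.
  apply: (@continuous_max _ _ (fun g => ps * hh g Dmax - lam) (fun _ => 0)).
    apply: cvgD; last exact: cvg_cst.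
    by apply: cvgM; [exact: cvg_cst|exact: hh_cont].
  exact: cvg_cst.
apply: cvgD; last exact: cvg_cst.
exact: cvg_id.
Qed.

Lemma hhS g k : hh g k.+1 = hh g k + (mm g k / (1 - ps) + g - k%:R - pg) / pg.
Proof. by []. Qed.

Lemma mm_ge0 g k : 0 <= mm g k.
Proof. by rewrite /mm le_max lexx orbT. Qed.

Lemma mm_eq0 g k : ps * hh g k <= lam -> mm g k = 0.
Proof. by move=> h; rewrite /mm max_r // subr_le0. Qed.

Lemma mm_pos g k : lam <= ps * hh g k -> mm g k = ps * hh g k - lam.
Proof. by move=> h; rewrite /mm max_l // subr_ge0. Qed.

Lemma qpos : 0 < 1 - ps. Proof. by rewrite subr_gt0. Qed.

Lemma hh0_le0 k : hh 0 k <= 0.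
Proof.
elim: k => [|k IH] //; rewrite hhS mm_eq0; last first.
  by apply: le_trans hlam; rewrite pmulr_rle0.
have : (0 / (1 - ps) + 0 - k%:R - pg) / pg <= 0.
  rewrite ler_pdivrMr // !mul0r; by have := ler0n R k; lra'.
lra'.
Qed.

Lemma GG0 : GG 0 <= 0.
Proof.
rewrite /GG mm_eq0; last by apply: le_trans hlam; rewrite pmulr_rle0 ?hh0_le0.
by rewrite mul0r addr0 sub0r oppr_le0.
Qed.

Lemma GGD : 0 <= GG Dmax%:R.
Proof. by rewrite /GG subrr add0r divr_ge0 ?mm_ge0 // ltW // qpos. Qed.

Lemma GG_root : exists g, GG g = 0.
Proof.
have H : Num.min (GG 0) (GG Dmax%:R) <= 0 <= Num.max (GG 0) (GG Dmax%:R).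
  by rewrite ge_min GG0 /= le_max GGD orbT.
have [c _ hc] := @IVT R GG 0 Dmax%:R 0 (ler0n _ _) (continuous_subspaceT GG_cont) H.
by exists c.
Qed.

Section WithG.
Variable g : R.
Hypothesis Hg : GG g = 0.

Lemma up_closed k : (k < Dmax)%N -> lam < ps * hh g k -> lam < ps * hh g k.+1.
Proof.
move=> kD hk; rewrite ltNge; apply/negP => hk1.
have a0 : 0 <= mm g k / (1 - ps) by rewrite divr_ge0 ?mm_ge0 // ltW // qpos.
have hX : mm g k / (1 - ps) + g - k%:R - pg < 0.
  have h1 : hh g k.+1 < hh g k by rewrite -(ltr_pM2l hps0); lra'.
  move: h1; rewrite hhS => h1.
  have : (mm g k / (1 - ps) + g - k%:R - pg) / pg < 0 by lra'.
  by rewrite ltr_pdivrMr // mul0r.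
have gk : g < k%:R + pg by lra'.
have claim n : (k.+1 + n <= Dmax)%N -> ps * hh g (k.+1 + n) <= lam.
  elim: n => [|n IH]; first by rewrite addn0.
  move=> hn; have hn' : (k.+1 + n <= Dmax)%N by rewrite addnS in hn; exact: ltnW.
  have IH' := IH hn'.
  rewrite addnS hhS mm_eq0 //.
  set j := (k.+1 + n)%N.
  have jk : k%:R + 1 <= j%:R :> R by rewrite natr1 ler_nat /j addSn ltnS leq_addr.
  have : (0 / (1 - ps) + g - j%:R - pg) / pg < 0.
    by rewrite ltr_pdivrMr // !mul0r; lra'.
  move: (_ / pg) => y hy.
  have : ps * y < 0 by rewrite pmulr_rlt0.
  rewrite mulrDr; lra'.
have := claim (Dmax - k.+1)%N; rewrite subnKC // leqnn => /(_ isT) hD'.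
move: Hg; rewrite /GG mm_eq0 // mul0r addr0 => hg.
have : k.+1%:R <= Dmax%:R :> R by rewrite ler_nat.
rewrite -natr1; lra'.
Qed.


Definition hS (s : S) : R := hh g s.
Definition VV (s' : S) : R := (nat_of_ord s')%:R + hS s'.
Definition Q (s : S) (a : bool) : R :=
  \sum_s' tr s a s' * (tcost lam s a s' + hS s').

Lemma P0V s : P0 VV s = g + hS s + mm g s / (1 - ps).
Proof.
rewrite /P0; case: ifP => sD.
  rewrite /VV /hS inordK // hhS -natr1.
  move: (mm g s / (1 - ps)) => M.
  field; rewrite lt0r_neq0 //.
have sE : nat_of_ord s = Dmax.
  by apply/eqP; rewrite eqn_leq -ltnS ltn_ord leqNgt sD.
move: Hg; rewrite /VV /hS /GG sE; lra'.
Qed.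

Lemma hS0 : hS ord0 = 0. Proof. by []. Qed.

Lemma mm0 : mm g 0 = 0.
Proof. by rewrite mm_eq0 //= mulr0. Qed.

Lemma Q0 s : Q s false = g + hS s + mm g s / (1 - ps).
Proof.
rewrite /Q /tcost /ind; under eq_bigr do rewrite mulr0 addr0.
by rewrite (trans0E VV) P0V.
Qed.

Lemma Q1 s : Q s true = g + hS s + (lam - ps * hS s + mm g s).
Proof.
rewrite /Q /tcost /ind; under eq_bigr do rewrite mulr1 addrAC mulrDr.
rewrite big_split /= -mulr_suml trans_sum1 mul1r (trans1E VV) !P0V hS0 mm0.
rewrite mul0r addr0.
have q := qpos.
move: (mm g s) => M.
field; rewrite lt0r_neq0 //.
Qed.

Lemma Q_ge s a : g + hS s <= Q s a.
Proof.
case: a; [rewrite Q1|rewrite Q0]; rewrite lerDl.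
  have := mm_ge0 g s; have : ps * hS s - lam <= mm g s by rewrite /mm le_max lexx.
  lra'.
by rewrite divr_ge0 ?mm_ge0 // ltW // qpos.
Qed.

Definition DT := find (fun k => lam < ps * hh g k) (iota 0 Dmax.+1).

Lemma DT_up n : (DT + n <= Dmax)%N -> lam < ps * hh g (DT + n).
Proof.
elim: n => [|n IH] h.
  rewrite addn0.
  have hlt : (DT < Dmax.+1)%N by rewrite ltnS -(addn0 DT).
  have hs : has (fun k => lam < ps * hh g k) (iota 0 Dmax.+1).
    by rewrite has_find size_iota.
  by have := nth_find 0%N hs; rewrite -/DT nth_iota.
rewrite addnS; apply: up_closed; first by rewrite -addnS.
by apply: IH; rewrite addnS in h; exact: ltnW.
Qed.

Lemma DT_le (s : S) : (DT <= s)%N = (lam < ps * hS s).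
Proof.
case: (leqP DT s) => h.
  have := DT_up (s - DT); rewrite subnKC // => /(_ _); rewrite -ltnS ltn_ord.
  by move=> /(_ isT) ->.
have := @before_find _ 0%N (fun k => lam < ps * hh g k) (iota 0 Dmax.+1) s h.
by rewrite nth_iota ?add0n // ltn_ord => ->.
Qed.

Lemma Q_thr s : Q s (DT <= s)%N = g + hS s.
Proof.
rewrite DT_le; case: ltP => hs.
  by rewrite Q1 mm_pos ?ltW // /hS; ring.
by rewrite Q0 mm_eq0 // mul0r addr0.
Qed.


Lemma avg_ge (I : finType) (w X : I -> R) c : (forall i, 0 <= w i) ->
  \sum_i w i = 1 -> (forall i, c <= X i) -> c <= \sum_i w i * X i.
Proof.
move=> w0 w1 hX; have -> : c = \sum_i w i * c by rewrite -mulr_suml w1 mul1r.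
by apply: ler_sum => i _; rewrite ler_wpM2l.
Qed.

Lemma avg_le (I : finType) (w X : I -> R) c : (forall i, 0 <= w i) ->
  \sum_i w i = 1 -> (forall i, X i <= c) -> \sum_i w i * X i <= c.
Proof.
move=> w0 w1 hX; have -> : c = \sum_i w i * c by rewrite -mulr_suml w1 mul1r.
by apply: ler_sum => i _; rewrite ler_wpM2l.
Qed.

Section Pol.
Variables (pol : nat -> S -> bool -> R) (s0 : S).
Hypothesis Hpol : markov_policy pol.
Local Notation dist := (state_dist ps pg pol s0).

Lemma pol_ge0 t s a : 0 <= pol t s a.
Proof. by case: (Hpol t s) => h _; apply: h. Qed.

Lemma pol_sum t s : \sum_a pol t s a = 1.
Proof. by rewrite big_bool /= addrC; case: (Hpol t s). Qed.

Lemma dist_ge0 t s : 0 <= dist t s.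
Proof.
elim: t s => [|t IH] s /=; first by apply: ind_ge0.
apply: sumr_ge0 => s' _; apply: mulr_ge0 => //.
by apply: addr_ge0; apply: mulr_ge0; rewrite ?pol_ge0 ?trans_ge0.
Qed.

Lemma dist_next t f : \sum_s' dist t.+1 s' * f s' =
  \sum_s dist t s * \sum_(a : bool) pol t s a * \sum_s' tr s a s' * f s'.
Proof.
rewrite /=; under eq_bigr do rewrite mulr_suml.
rewrite exchange_big; apply: eq_bigr => s _ /=.
under eq_bigr do rewrite -mulrA.
rewrite big_bool /= -mulr_sumr; congr (_ * _).
rewrite !mulr_sumr -big_split /=; apply: eq_bigr => i _; ring.
Qed.

Lemma E0 f : \sum_s dist 0 s * f s = f s0.
Proof.
rewrite (bigD1 s0) //= /ind eqxx mul1r big1 ?addr0 // => i /negPf -> .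
by rewrite mul0r.
Qed.

Lemma dist_sum1 t : \sum_s dist t s = 1.
Proof.
elim: t => [|t IH].
  by rewrite -(E0 (fun _ => 1)); apply: eq_bigr => s _; rewrite mulr1.
have := dist_next t (fun _ => 1).
have L : \sum_s' dist t.+1 s' * 1 = \sum_s dist t.+1 s.
  by apply: eq_bigr => i _; rewrite mulr1.
rewrite L => ->; rewrite -[RHS]IH; apply: eq_bigr => s _.
have E a : \sum_s' tr s a s' * 1 = 1.
  by rewrite -[RHS](trans_sum1 s a); apply: eq_bigr => i _; rewrite mulr1.
rewrite (eq_bigr (fun a => pol t s a)); last first.
  move=> a _; rewrite -[RHS]mulr1; congr (_ * _).
  by rewrite -[RHS](trans_sum1 s a); apply: eq_bigr => i _; rewrite /= mulr1.
by rewrite pol_sum mulr1.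
Qed.

Lemma step_eq t : exp_cost ps pg lam pol s0 t + \sum_s dist t.+1 s * hS s =
  \sum_s dist t s * \sum_(a : bool) pol t s a * Q s a.
Proof.
rewrite dist_next /exp_cost -big_split; apply: eq_bigr => s _ /=.
rewrite -mulrDr; congr (_ * _); rewrite -big_split; apply: eq_bigr => a _ /=.
rewrite -mulrDr /Q; congr (_ * _); rewrite -big_split; apply: eq_bigr => s' _ /=.
exact: (esym (mulrDr _ _ _)).
Qed.

Lemma Eg t : g + \sum_s dist t s * hS s = \sum_s dist t s * (g + hS s).
Proof.
under [RHS]eq_bigr do rewrite mulrDr.
by rewrite big_split /= -mulr_suml dist_sum1 mul1r.
Qed.

Lemma step_ge t : g + \sum_s dist t s * hS s <=
  exp_cost ps pg lam pol s0 t + \sum_s dist t.+1 s * hS s.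
Proof.
rewrite step_eq Eg; apply: ler_sum => s _; rewrite ler_wpM2l ?dist_ge0 //.
apply: avg_ge => //; [exact: pol_ge0|exact: pol_sum|exact: Q_ge].
Qed.

Lemma step_eq' t : (forall s, \sum_(a : bool) pol t s a * Q s a = g + hS s) ->
  exp_cost ps pg lam pol s0 t + \sum_s dist t.+1 s * hS s =
  g + \sum_s dist t s * hS s.
Proof.
move=> H; rewrite step_eq Eg; apply: eq_bigr => s _; by rewrite H.
Qed.

Lemma tele_ge T : T%:R * g + hS s0 - \sum_s dist T s * hS s <=
  \sum_(t < T) exp_cost ps pg lam pol s0 t.
Proof.
elim: T => [|T IH].
  by rewrite big_ord0 E0 mul0r add0r subrr.
have ES : \sum_(t < T.+1) exp_cost ps pg lam pol s0 t =
    \sum_(t < T) exp_cost ps pg lam pol s0 t + exp_cost ps pg lam pol s0 T.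
  by rewrite big_ord_recr.
rewrite ES -natr1 mulrDl mul1r.
have := step_ge T.
move: (\sum_s dist T s * hS s) (\sum_s dist T.+1 s * hS s)
  (\sum_(i < T) exp_cost ps pg lam pol s0 i) (exp_cost ps pg lam pol s0 T) IH.
move=> a b c d; lra'.
Qed.

Lemma tele_eq T : (forall t s, \sum_(a : bool) pol t s a * Q s a = g + hS s) ->
  \sum_(t < T) exp_cost ps pg lam pol s0 t =
  T%:R * g + hS s0 - \sum_s dist T s * hS s.
Proof.
move=> H; elim: T => [|T IH].
  by rewrite big_ord0 E0 mul0r add0r subrr.
have ES : \sum_(t < T.+1) exp_cost ps pg lam pol s0 t =
    \sum_(t < T) exp_cost ps pg lam pol s0 t + exp_cost ps pg lam pol s0 T.
  by rewrite big_ord_recr.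
rewrite ES -natr1 mulrDl mul1r.
have := step_eq' T (H T).
move: (\sum_s dist T s * hS s) (\sum_s dist T.+1 s * hS s)
  (\sum_(i < T) exp_cost ps pg lam pol s0 i) (exp_cost ps pg lam pol s0 T) IH.
move=> a b c d; lra'.
Qed.

Definition BB := \sum_s `|hS s|.

Lemma BB_ge s : `|hS s| <= BB.
Proof.
rewrite /BB (bigD1 s) //= lerDl; exact: sumr_ge0.
Qed.

Lemma BB_ge0 : 0 <= BB.
Proof. exact: le_trans (normr_ge0 _) (BB_ge ord0). Qed.

Lemma E_bound T : `|\sum_s dist T s * hS s| <= BB.
Proof.
apply: le_trans (ler_norm_sum _ _ _) _.
under eq_bigr do rewrite normrM (ger0_norm (dist_ge0 _ _)).
apply: avg_le; [exact: dist_ge0|exact: dist_sum1|exact: BB_ge].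
Qed.

Lemma cost_bound t : 0 <= exp_cost ps pg lam pol s0 t <= Dmax%:R + lam.
Proof.
have hc (s : S) (a : bool) (s' : S) : 0 <= tcost lam s a s' <= Dmax%:R + lam.
  rewrite /tcost; have : (nat_of_ord s')%:R <= Dmax%:R :> R.
    by rewrite ler_nat -ltnS; exact: ltn_ord.
  have := ler0n R s'; rewrite /ind; case: a => /=; lra'.
apply/andP; split.
  apply: avg_ge => [s|//|s]; [exact: dist_ge0|exact: dist_sum1|].
  apply: avg_ge => [a|//|a]; [exact: pol_ge0|exact: pol_sum|].
  apply: avg_ge => [s'|//|s']; [exact: trans_ge0|exact: trans_sum1|].
  by case/andP: (hc s a s').
apply: avg_le => [s|//|s]; [exact: dist_ge0|exact: dist_sum1|].
apply: avg_le => [a|//|a]; [exact: pol_ge0|exact: pol_sum|].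
apply: avg_le => [s'|//|s']; [exact: trans_ge0|exact: trans_sum1|].
by case/andP: (hc s a s').
Qed.

End Pol.

End WithG.

Lemma main_sec : exists DT : nat,
    forall (pol : nat -> 'I_Dmax.+1 -> bool -> R) (s0 : 'I_Dmax.+1),
      @markov_policy R Dmax pol ->
      @avg_cost R ps pg lam Dmax (@threshold_policy R Dmax DT) s0
        <= @avg_cost R ps pg lam Dmax pol s0.
Proof.
have [g Hg] := GG_root.
exists (DT g) => pol s0 Hpol.
set thr := threshold_policy R (DT g).
have Hthr : markov_policy thr.
  move=> t s; split; first by move=> a; exact: ind_ge0.
  by rewrite /thr /threshold_policy /ind; case: (DT g <= s)%N => /=;
    rewrite ?add0r ?addr0.
have Hq t s : \sum_a thr t s a * Q g s a = g + hS g s.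
  rewrite big_bool /= /thr /threshold_policy /ind.
  have := Q_thr g Hg s; case: (DT g <= s)%N => /= <-.
    by rewrite mul1r mul0r addr0.
  by rewrite mul1r mul0r add0r.
have B0 := BB_ge0 g.
have K0 : 0 <= Dmax%:R + lam by apply: addr_ge0; rewrite ?ler0n.
have -> : avg_cost ps pg lam thr s0 = g.
  rewrite /avg_cost; apply: (@limsup_eq R _ g (2 * BB g)).
    by rewrite mulr_ge0.
  move=> T T0; have E := tele_eq g thr s0 Hthr T Hq; rewrite -addrA in E.
  apply: (@avg_close R T _ g _ _ T0 E).
  apply: le_trans (ler_normD _ _) _.
  rewrite mulr2n mulrDl mul1r; apply: lerD; first exact: BB_ge.
  by rewrite normrN; exact: E_bound.
rewrite /avg_cost; apply: (@limsup_ge R _ g (2 * BB g) (Dmax%:R + lam)).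
- by rewrite mulr_ge0.
- move=> T T0; apply: (@avg_lower R T _ g _ _ T0).
    by have E := tele_ge g Hg pol s0 Hpol T; rewrite -addrA in E; exact: E.
  rewrite mulr2n mulrDl mul1r opprD.
  have h1 := BB_ge g s0; have h2 := E_bound g pol s0 Hpol T.
  move: h1 h2; rewrite !ler_norml => /andP[a1 a2] /andP[b1 b2].
  lra'.
- by apply: avg_bnd => // t; exact: (cost_bound pol s0 Hpol).
Qed.

End Main.

Theorem proposition5 (R : realType) (ps pg lam : R) (Dmax : nat)
  (hps0 : 0 < ps) (hps1 : ps < 1) (hpg0 : 0 < pg) (hpg1 : pg < 1)
  (hlam : 0 <= lam) (hD : (1 <= Dmax)%N) :
  exists DT : nat,
    forall (pol : nat -> 'I_Dmax.+1 -> bool -> R) (s0 : 'I_Dmax.+1),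
      @markov_policy R Dmax pol ->
      @avg_cost R ps pg lam Dmax (@threshold_policy R Dmax DT) s0
        <= @avg_cost R ps pg lam Dmax pol s0.
Proof. by apply: main_sec. Qed.
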